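(* Let $\phi,\chi,\psi$ be Dirichlet characters of conductors $h,k,q$ respectively, and let $a,b$ be positive integers forming an admissible index (i.e. such that all the limits and series below converge). Assume $\phi\chi\psi(-1)=(-1)^{a+b+1}$. Then $$\tau(\overline{\phi})\,\tau(\overline{\chi})\,\tau(\overline{\psi})\,L(0,a,b\,;\phi,\chi,\psi)=\sum_{j=1}^{h-1}\sum_{l=1}^{k-1}\sum_{r=1}^{q-1}\overline{\phi}(j)\,\overline{\chi}(l)\,\overline{\psi}(r)\,U\!\left(a,b\,;\tfrac{j}{h}+\tfrac{r}{q},\tfrac{l}{k}+\tfrac{r}{q}\right).$$
   Context: For real $x,y$, $T(0,a,b\,;x,y):=\lim_{R\to\infty}\sum_{m,n\ge1,\ m+n\le R}\frac{e^{2\pi i m x}e^{2\pi i n y}}{n^a (m+n)^b}$ (the Lerch type Tornheim double zeta function at $(0,a,b)$), and $U$ is defined by $2U(a,b\,;x,y):=T(0,a,b\,;x,y)-(-1)^{a+b}T(0,a,b\,;-x,-y)$. Further, $$L(0,a,b\,;\phi,\chi,\psi):=\lim_{R\to\infty}\sum_{m,n\ge1,\ m+n\le R}\frac{\phi(m)\chi(n)\psi(m+n)}{n^a(m+n)^b},$$ and for a character $\chi$ of conductor $k$ the Gauss sum is $\tau(\chi):=\sum_{l=1}^{k-1}\chi(l)e^{2\pi i l/k}$. *)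

(* Defs.v *)
From Stdlib Require Import Reals ZArith Znumtheory.
From Coquelicot Require Import Coquelicot.
Open Scope R_scope.

Definition e2pi (t : R) : C := (cos (2 * PI * t), sin (2 * PI * t)).

Definition is_dirichlet_char (k : Z) (chi : Z -> C) : Prop :=
  (0 < k)%Z /\
  (forall n : Z, chi (n + k)%Z = chi n) /\
  (forall m n : Z, chi (m * n)%Z = Cmult (chi m) (chi n)) /\
  chi 1%Z = RtoC 1 /\
  (forall n : Z, chi n = RtoC 0 <-> Z.gcd n k <> 1%Z).

Definition is_primitive (k : Z) (chi : Z -> C) : Prop :=
  forall d : Z, (0 < d)%Z -> Z.divide d k -> (d < k)%Z ->
    exists n : Z, Z.modulo n d = Z.modulo 1 d /\ Z.gcd n k = 1%Z /\ chi n <> RtoC 1.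

Definition has_conductor (k : Z) (chi : Z -> C) : Prop :=
  is_dirichlet_char k chi /\ is_primitive k chi.

Definition char_conj (chi : Z -> C) : Z -> C := fun n => Cconj (chi n).

Definition gauss_sum (k : nat) (chi : Z -> C) : C :=
  sum_n_m (fun l : nat => Cmult (chi (Z.of_nat l)) (e2pi (INR l / INR k))) 1 (k - 1).

Definition tri_sum (R0 : nat) (f : nat -> nat -> C) : C :=
  sum_n_m (fun m : nat =>
    sum_n_m (fun n : nat => if (m + n <=? R0)%nat then f m n else RtoC 0) 1 R0) 1 R0.

Definition T_partial (a b : nat) (x y : R) (R0 : nat) : C :=
  tri_sum R0 (fun m n =>
    Cdiv (Cmult (e2pi (INR m * x)) (e2pi (INR n * y)))
         (RtoC (INR n ^ a * INR (m + n) ^ b))).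

Definition L_partial (a b : nat) (phi chi psi : Z -> C) (R0 : nat) : C :=
  tri_sum R0 (fun m n =>
    Cdiv (Cmult (Cmult (phi (Z.of_nat m)) (chi (Z.of_nat n))) (psi (Z.of_nat (m + n))))
         (RtoC (INR n ^ a * INR (m + n) ^ b))).

Definition is_T (a b : nat) (x y : R) (t : C) : Prop :=
  filterlim (T_partial a b x y) eventually (locally t).

Definition is_L (a b : nat) (phi chi psi : Z -> C) (v : C) : Prop :=
  filterlim (L_partial a b phi chi psi) eventually (locally v).

Definition U_of (a b : nat) (T : R -> R -> C) (x y : R) : C :=
  Cmult (RtoC (/ 2))
    (Cminus (T x y) (Cmult (RtoC ((-1) ^ (a + b))) (T (- x) (- y)))).

(* Main.v *)
Require Import Defs.
From Stdlib Require Import Reals ZArith Znumtheory Lia Lra List Permutation.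
From Coquelicot Require Import Coquelicot.
Open Scope R_scope.

Lemma Csum_mult_l (a : C) (u : nat -> C) n m :
  sum_n_m (fun k => Cmult a (u k)) n m = Cmult a (sum_n_m u n m).
Proof. exact (sum_n_m_mult_l a u n m). Qed.
Lemma Csum_mult_r (a : C) (u : nat -> C) n m :
  sum_n_m (fun k => Cmult (u k) a) n m = Cmult (sum_n_m u n m) a.
Proof. exact (sum_n_m_mult_r a u n m). Qed.
Lemma Csum_plus (u v : nat -> C) n m :
  sum_n_m (fun k => Cplus (u k) (v k)) n m = Cplus (sum_n_m u n m) (sum_n_m v n m).
Proof. exact (sum_n_m_plus u v n m). Qed.
Lemma Csum_zero n m : sum_n_m (fun _ => RtoC 0) n m = RtoC 0.
Proof. exact (@sum_n_m_const_zero C_AbelianMonoid n m). Qed.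
Lemma Csum_empty (u : nat -> C) n m : (m < n)%nat -> sum_n_m u n m = RtoC 0.
Proof. intros; exact (sum_n_m_zero u n m H). Qed.
Lemma Csum_Sn (u : nat -> C) n m : (n <= m)%nat -> sum_n_m u n m = Cplus (u n) (sum_n_m u (S n) m).
Proof. intros; exact (sum_Sn_m u n m H). Qed.
Lemma Csum_nS (u : nat -> C) n m : (n <= S m)%nat -> sum_n_m u n (S m) = Cplus (sum_n_m u n m) (u (S m)).
Proof. intros; exact (sum_n_Sm u n m H). Qed.
Lemma Csum_nn (u : nat -> C) n : sum_n_m u n n = u n.
Proof. exact (sum_n_n u n). Qed.
Lemma Csum_ext (u v : nat -> C) n m : (forall k, (n <= k <= m)%nat -> u k = v k) -> sum_n_m u n m = sum_n_m v n m.
Proof. apply sum_n_m_ext_loc. Qed.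
Lemma Csum_shift (u : nat -> C) n m : sum_n_m (fun k => u (S k)) n m = sum_n_m u (S n) (S m).
Proof. exact (sum_n_m_S u n m). Qed.

Lemma Csum_exchange (f : nat -> nat -> C) a b c d :
  sum_n_m (fun i => sum_n_m (fun j => f i j) a b) c d =
  sum_n_m (fun j => sum_n_m (fun i => f i j) c d) a b.
Proof.
  destruct (Nat.lt_ge_cases d c) as [Hd|Hd].
  { rewrite Csum_empty; auto. rewrite <- (Csum_zero a b). apply Csum_ext; intros. rewrite Csum_empty; auto. }
  replace d with (c + (d - c))%nat by lia. generalize (d - c)%nat as n. induction n.
  - rewrite Nat.add_0_r, Csum_nn. apply Csum_ext; intros; now rewrite Csum_nn.
  - rewrite Nat.add_succ_r, Csum_nS by lia. rewrite IHn.
    rewrite <- Csum_plus. apply Csum_ext; intros. rewrite Csum_nS by lia. reflexivity.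
Qed.

Lemma Csum_reflect (f : nat -> C) len a :
  sum_n_m f a (a + len) = sum_n_m (fun j => f (a + (a + len) - j)%nat) a (a + len).
Proof.
  revert a. induction len; intros a.
  - rewrite Nat.add_0_r, !Csum_nn. f_equal; lia.
  - rewrite (Csum_Sn f) by lia.
    replace (a + S len)%nat with (S a + len)%nat by lia. rewrite (IHlen (S a)).
    replace (S a + len)%nat with (S (a + len)) by lia.
    rewrite <- Csum_shift.
    rewrite (Csum_nS (fun j => f (a + S (a + len) - j)%nat)) by lia.
    replace (a + S (a + len) - S (a + len))%nat with a by lia.
    rewrite Cplus_comm. f_equal.
Qed.

Lemma lim_Cmult_l (f : nat -> C) (c x: C) : filterlim f eventually (locally x) -> filterlim (fun n => Cmult c (f n)) eventually (locally (Cmult c x)).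
Proof. intros H. eapply filterlim_comp. exact H.
pose proof (@filterlim_scal_r C_AbsRing C_NormedModule c x) as K. exact K. Qed.
Lemma lim_Cplus (f g : nat -> C) ( x y: C) : filterlim f eventually (locally x) -> filterlim g eventually (locally y) -> filterlim (fun n => Cplus (f n) (g n)) eventually (locally (Cplus x y)).
Proof. intros H H2. eapply filterlim_comp_2. exact H. exact H2. pose proof (@filterlim_plus C_AbsRing C_NormedModule x y) as K. exact K. Qed.
Lemma lim_uniq (f : nat -> C) (x y : C) : filterlim f eventually (locally x) -> filterlim f eventually (locally y) -> x = y.
Proof. intros. exact (@filterlim_locally_unique _ C_AbsRing C_NormedModule _ _ f x y H H0). Qed.

Lemma lim_sum (f : nat -> nat -> C) (v : nat -> C) a b :
  (forall i, (a <= i <= b)%nat -> filterlim (f i) eventually (locally (v i))) ->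
  filterlim (fun R => sum_n_m (fun i => f i R) a b) eventually (locally (sum_n_m v a b)).
Proof.
  intros H. destruct (Nat.lt_ge_cases b a) as [Hd|Hd].
  { rewrite Csum_empty by auto. eapply filterlim_ext.
    2: apply filterlim_const. intros; simpl. now rewrite Csum_empty. }
  revert H. replace b with (a + (b - a))%nat by lia. generalize (b - a)%nat as n. induction n; intros H.
  - rewrite Nat.add_0_r, Csum_nn. eapply filterlim_ext.
    2: apply H; lia. intros; simpl. now rewrite Csum_nn.
  - rewrite Nat.add_succ_r, Csum_nS by lia.
    eapply filterlim_ext. 2: apply lim_Cplus. 2: apply IHn; intros; apply H; lia.
    2: apply H; lia. intros; simpl. rewrite Csum_nS by lia. reflexivity.
Qed.

Lemma e2pi_add s t : e2pi (s + t) = Cmult (e2pi s) (e2pi t).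
Proof.
  unfold e2pi. replace (2 * PI * (s + t)) with (2 * PI * s + 2 * PI * t) by ring.
  rewrite cos_plus, sin_plus. unfold Cmult; simpl. f_equal; ring.
Qed.

Lemma e2pi_nat t (n : nat) : e2pi (t + INR n) = e2pi t.
Proof.
  unfold e2pi. replace (2 * PI * (t + INR n)) with (2 * PI * t + 2 * INR n * PI) by ring.
  now rewrite cos_period, sin_period.
Qed.

Lemma e2pi_Z t (z : Z) : e2pi (t + IZR z) = e2pi t.
Proof.
  destruct (Z_le_gt_dec 0 z).
  - rewrite <- (Z2Nat.id z) by lia. rewrite <- INR_IZR_INZ. apply e2pi_nat.
  - rewrite <- (e2pi_nat (t + IZR z) (Z.to_nat (- z))). f_equal.
    rewrite INR_IZR_INZ, Z2Nat.id by lia. rewrite opp_IZR. ring.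
Qed.

Definition lsum (l : list C) : C := fold_right Cplus (RtoC 0) l.

Lemma lsum_perm l1 l2 : Permutation l1 l2 -> lsum l1 = lsum l2.
Proof.
  induction 1; simpl; auto.
  - now rewrite IHPermutation.
  - unfold lsum; simpl. ring.
  - congruence.
Qed.

Lemma lsum_scal {A} (a : C) (g : A -> C) l : lsum (map (fun z => Cmult a (g z)) l) = Cmult a (lsum (map g l)).
Proof. induction l; simpl. unfold lsum; simpl; ring. unfold lsum in *; simpl. rewrite IHl. ring. Qed.

Lemma lsum_ext {A} (f g : A -> C) l : (forall z, In z l -> f z = g z) -> lsum (map f l) = lsum (map g l).
Proof. intros H. f_equal. apply map_ext_in. auto. Qed.

Lemma lsum_seq (G : nat -> C) s n : lsum (map G (seq s (S n))) = sum_n_m G s (s + n).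
Proof.
  revert s. induction n; intros s.
  - simpl. rewrite Nat.add_0_r, Csum_nn. unfold lsum; simpl. ring.
  - change (lsum (map G (seq s (S (S n))))) with (Cplus (G s) (lsum (map G (seq (S s) (S n))))).
    rewrite IHn. rewrite (Csum_Sn G s) by lia. f_equal. f_equal. lia.
Qed.

Lemma lsum_RtoC {A} (g : A -> R) l : lsum (map (fun z => RtoC (g z)) l) = RtoC (fold_right Rplus 0 (map g l)).
Proof. induction l; simpl. reflexivity. unfold lsum in *; simpl. rewrite IHl. unfold Cplus, RtoC; simpl. f_equal; ring. Qed.

Lemma fold_ge {A} (g : A -> R) l x : In x l -> (forall y, 0 <= g y) -> g x <= fold_right Rplus 0 (map g l).
Proof.
  induction l; simpl; intros [] Hg.
  - subst. assert (0 <= fold_right Rplus 0 (map g l)). { clear - Hg. induction l; simpl. lra. pose proof (Hg a). lra. }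
    lra.
  - pose proof (IHl H Hg). pose proof (Hg a). lra.
Qed.

Definition Lz (k : nat) : list Z := map Z.of_nat (seq 0 k).

Lemma in_Lz k z : In z (Lz k) <-> (0 <= z < Z.of_nat k)%Z.
Proof.
  unfold Lz. rewrite in_map_iff. split.
  - intros [n [<- Hn]]. apply in_seq in Hn. lia.
  - intros H. exists (Z.to_nat z). split. lia. apply in_seq. lia.
Qed.

Lemma NoDup_Lz k : NoDup (Lz k).
Proof. unfold Lz. apply NoDup_map_NoDup_ForallPairs. intros a b _ _ H; lia. apply seq_NoDup. Qed.

Lemma perm_mul (k : nat) (c : Z) : (0 < Z.of_nat k)%Z -> Z.gcd c (Z.of_nat k) = 1%Z ->
  Permutation (map (fun z => (c * z) mod Z.of_nat k)%Z (Lz k)) (Lz k).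
Proof.
  intros Hk Hc. apply NoDup_Permutation_bis.
  - apply NoDup_map_NoDup_ForallPairs. 2: apply NoDup_Lz.
    intros a b Ha Hb Hab. apply in_Lz in Ha, Hb.
    assert (Hd : (Z.of_nat k | c * (a - b))%Z).
    { apply Z.mod_divide. lia. rewrite Z.mul_sub_distr_l, Zminus_mod, Hab, Z.sub_diag. reflexivity. }
    apply Gauss in Hd. 2: { apply rel_prime_sym, Zgcd_1_rel_prime. exact Hc. }
    destruct Hd as [t Ht]. assert (t < 1)%Z by nia. assert (t > -1)%Z by nia. assert (t = 0)%Z by lia. subst. lia.
  - rewrite length_map. lia.
  - intros w Hw. apply in_map_iff in Hw. destruct Hw as [z [<- _]]. apply in_Lz.
    apply Z.mod_pos_bound. lia.
Qed.

Lemma per_mult (K : Z) (F : Z -> C) : (forall z, F (z + K)%Z = F z) -> forall z t, F (z + t * K)%Z = F z.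
Proof.
  intros HF z t. destruct (Z_le_gt_dec 0 t).
  - rewrite <- (Z2Nat.id t) by lia. induction (Z.to_nat t). simpl. f_equal; lia.
    rewrite Nat2Z.inj_succ. replace (z + Z.succ (Z.of_nat n) * K)%Z with ((z + Z.of_nat n * K) + K)%Z by lia.
    now rewrite HF.
  - assert (Hp : forall z, F (z + (- t) * K)%Z = F z).
    { intros z0. rewrite <- (Z2Nat.id (- t)) by lia. induction (Z.to_nat (-t)). simpl. f_equal; lia.
      rewrite Nat2Z.inj_succ. replace (z0 + Z.succ (Z.of_nat n) * K)%Z with ((z0 + Z.of_nat n * K) + K)%Z by lia.
      now rewrite HF. }
    rewrite <- (Hp (z + t * K)%Z). f_equal. lia.
Qed.

Lemma reindex (k : nat) (c : Z) (F : Z -> C) : (0 < Z.of_nat k)%Z -> Z.gcd c (Z.of_nat k) = 1%Z ->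
  (forall z, F (z + Z.of_nat k)%Z = F z) ->
  lsum (map F (Lz k)) = lsum (map (fun z => F (c * z)%Z) (Lz k)).
Proof.
  intros Hk Hc HF.
  rewrite <- (lsum_perm _ _ (Permutation_map F (perm_mul k c Hk Hc))).
  rewrite map_map. apply lsum_ext. intros z _.
  rewrite (Z.mod_eq (c * z) (Z.of_nat k)) by lia.
  replace (c * z - Z.of_nat k * (c * z / Z.of_nat k))%Z with (c * z + (- (c * z / Z.of_nat k)) * Z.of_nat k)%Z by ring.
  apply (per_mult _ F HF).
Qed.

Section Char.
Variable (k : nat) (chi : Z -> C).
Hypothesis Hc : has_conductor (Z.of_nat k) chi.
Hypothesis Hk : (2 <= k)%nat.

Let K := Z.of_nat k.

Lemma chi_per z : chi (z + K)%Z = chi z.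
Proof. destruct Hc as [[_ [H _]] _]. apply H. Qed.

Lemma chi_mul m n : chi (m * n)%Z = Cmult (chi m) (chi n).
Proof. destruct Hc as [[_ [_ [H _]]] _]. apply H. Qed.

Lemma chi_zero : chi 0%Z = RtoC 0.
Proof. destruct Hc as [[_ [_ [_ [_ H]]]] _]. apply H. rewrite Z.gcd_0_l. unfold K; lia. Qed.

Lemma chi_unit n : Z.gcd n K = 1%Z -> Cmult (chi n) (Cconj (chi n)) = RtoC 1.
Proof.
  intros Hn.
  set (P := lsum (map (fun z => Cmult (chi z) (Cconj (chi z))) (Lz k))).
  assert (HP : P = Cmult (Cmult (chi n) (Cconj (chi n))) P).
  { unfold P at 1. rewrite (reindex k n) by (unfold K in *; try lia; auto; intros; now rewrite chi_per).
    unfold P. rewrite <- lsum_scal. apply lsum_ext; intros. rewrite chi_mul, Cmult_conj. ring. }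
  assert (HP0 : P <> RtoC 0).
  { unfold P. rewrite (lsum_ext _ (fun z => RtoC (Cmod (chi z) ^ 2))).
    2: { intros; now rewrite Cmod2_conj. }
    rewrite lsum_RtoC.
    assert (H1 : Cmod (chi 1%Z) ^ 2 <= fold_right Rplus 0 (map (fun z => Cmod (chi z) ^ 2) (Lz k))).
    { apply (fold_ge (fun z => Cmod (chi z) ^ 2)). apply in_Lz. lia. intros; apply pow2_ge_0. }
    destruct Hc as [[_ [_ [_ [H1' _]]]] _]. rewrite H1', Cmod_1 in H1.
    set (s := fold_right Rplus 0 _) in *. intros E. injection E as E. lra. }
  set (u := Cmult (chi n) (Cconj (chi n))) in *.
  transitivity (Cmult (Cmult u P) (Cinv P)).
  { rewrite <- Cmult_assoc, Cinv_r by auto. ring. }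
  rewrite <- HP. apply Cinv_r; auto.
Qed.

Definition S_ (n : Z) : C := lsum (map (fun z => Cmult (Cconj (chi z)) (e2pi (IZR z * IZR n / IZR K))) (Lz k)).

Lemma K_pos : (0 < K)%Z.
Proof. unfold K; lia. Qed.

Lemma K_nz : IZR K <> 0.
Proof. apply not_0_IZR. pose proof K_pos. lia. Qed.

Lemma S_reindex c n : Z.gcd c K = 1%Z -> S_ n = Cmult (Cconj (chi c)) (S_ (c * n)).
Proof.
  intros Hcn. unfold S_. rewrite (reindex k c).
  - rewrite <- lsum_scal. apply lsum_ext; intros. rewrite chi_mul, Cmult_conj.
    replace (IZR (c * z) * IZR n / IZR K) with (IZR z * IZR (c * n) / IZR K).
    ring. rewrite !mult_IZR. field. apply K_nz.
  - apply K_pos.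
  - exact Hcn.
  - intros z. rewrite chi_per. f_equal.
    replace (IZR (z + Z.of_nat k) * IZR n / IZR K) with (IZR z * IZR n / IZR K + IZR n).
    apply e2pi_Z. rewrite plus_IZR. fold K. field. apply K_nz.
Qed.

Lemma S_coprime n : Z.gcd n K = 1%Z -> S_ n = Cmult (chi n) (S_ 1).
Proof.
  intros Hn. rewrite (S_reindex n 1) by auto. rewrite Z.mul_1_r.
  transitivity (Cmult (Cmult (chi n) (Cconj (chi n))) (S_ n)).
  rewrite chi_unit by auto. ring. ring.
Qed.

Lemma S_noncoprime n : Z.gcd n K <> 1%Z -> S_ n = RtoC 0.
Proof.
  intros Hn. set (g := Z.gcd n K).
  assert (Hg0 : (0 <= g)%Z) by apply Z.gcd_nonneg.
  assert (Hgn : g <> 0%Z). { intros E. apply Z.gcd_eq_0 in E. pose proof K_pos. lia. }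
  destruct (Z.gcd_divide_r n K) as [d Hd]. fold g in Hd.
  destruct (Z.gcd_divide_l n K) as [v Hv]. fold g in Hv.
  pose proof K_pos.
  assert (Hd0 : (0 < d)%Z) by nia.
  assert (HdK : (d < K)%Z) by nia.
  destruct Hc as [_ Hprim].
  destruct (Hprim d Hd0 (ex_intro _ g (eq_trans Hd (Z.mul_comm d g))) HdK) as [c [Hc1 [Hc2 Hc3]]].
  assert (Hdc : exists u, (c - 1 = d * u)%Z).
  { exists (c / d - 1 / d)%Z. pose proof (Z.div_mod c d). pose proof (Z.div_mod 1 d). lia. }
  destruct Hdc as [u Hu].
  assert (E : S_ n = Cmult (Cconj (chi c)) (S_ n)).
  { rewrite (S_reindex c n) at 1 by auto. f_equal. unfold S_. apply lsum_ext; intros z _.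
    f_equal. replace (IZR z * IZR (c * n) / IZR K) with (IZR z * IZR n / IZR K + IZR (z * u * v)).
    apply e2pi_Z. 
    replace (c * n)%Z with (n + z * 0 + (c - 1) * n)%Z by ring. rewrite Hu, Hv.
    replace (IZR K) with (IZR (d * g)) by (f_equal; lia).
    rewrite !plus_IZR, !mult_IZR. field. split; apply not_0_IZR; lia. }
  assert (Hcc : Cconj (chi c) <> RtoC 1).
  { intros E2. apply Hc3. rewrite <- (Cconj_conj (chi c)), E2. unfold Cconj, RtoC; simpl. f_equal; ring. }
  set (s := S_ n) in *. set (w := Cconj (chi c)) in *.
  assert (Hw : Cminus (RtoC 1) w <> RtoC 0). { intros E3. apply Hcc. 
    transitivity (Cplus w (Cminus (RtoC 1) w)). rewrite E3; ring. ring. }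
  transitivity (Cmult (Cinv (Cminus (RtoC 1) w)) (Cmult (Cminus (RtoC 1) w) s)).
  { rewrite Cmult_assoc, (Cmult_comm (Cinv _)), Cinv_r by auto. ring. }
  replace (Cmult (Cminus (RtoC 1) w) s) with (RtoC 0). ring.
  transitivity (Cminus s s). ring. rewrite E at 2. ring.
Qed.

Lemma S_all n : S_ n = Cmult (chi n) (S_ 1).
Proof.
  destruct (Z.eq_dec (Z.gcd n K) 1) as [H|H].
  - now apply S_coprime.
  - rewrite S_noncoprime by auto. destruct Hc as [[_ [_ [_ [_ H5]]]] _].
    apply H5 in H. rewrite H. ring.
Qed.

Lemma S_as_sum (m : nat) : S_ (Z.of_nat m) =
  sum_n_m (fun l => Cmult (Cconj (chi (Z.of_nat l))) (e2pi (INR m * (INR l / INR k)))) 1 (k - 1).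
Proof.
  unfold S_, Lz. rewrite map_map. replace (seq 0 k) with (seq 0 (S (k - 1))) by (f_equal; lia).
  rewrite lsum_seq. simpl (0 + _)%nat. rewrite Csum_Sn by lia.
  change (Z.of_nat 0) with 0%Z. rewrite chi_zero. replace (Cconj (RtoC 0)) with (RtoC 0) by (unfold Cconj, RtoC; simpl; f_equal; ring).
  rewrite Cmult_0_l, Cplus_0_l. apply Csum_ext; intros l _. f_equal. f_equal.
  unfold K. rewrite <- !INR_IZR_INZ. field. apply not_0_INR. lia.
Qed.

End Char.

Lemma KL (k : nat) (chi : Z -> C) (Hc : has_conductor (Z.of_nat k) chi) (m : nat) :
  Cmult (gauss_sum k (char_conj chi)) (chi (Z.of_nat m)) =
  sum_n_m (fun l => Cmult (Cconj (chi (Z.of_nat l))) (e2pi (INR m * (INR l / INR k)))) 1 (k - 1).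
Proof.
  destruct (Nat.lt_ge_cases k 2).
  { unfold gauss_sum. rewrite !Csum_empty by lia. ring. }
  rewrite <- S_as_sum by auto. rewrite (S_all k chi Hc H). rewrite Cmult_comm. f_equal.
  rewrite <- (Z2Nat.id 1) by lia. rewrite (S_as_sum k chi Hc H). unfold gauss_sum, char_conj.
  apply Csum_ext; intros. f_equal. f_equal. simpl. ring.
Qed.

Lemma tri_ext R0 f g : (forall m n, f m n = g m n) -> tri_sum R0 f = tri_sum R0 g.
Proof. intros H. unfold tri_sum. apply Csum_ext; intros. apply Csum_ext; intros. now rewrite H. Qed.

Lemma tri_scal R0 a f : Cmult a (tri_sum R0 f) = tri_sum R0 (fun m n => Cmult a (f m n)).
Proof.
  unfold tri_sum. rewrite <- Csum_mult_l. apply Csum_ext; intros. rewrite <- Csum_mult_l.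
  apply Csum_ext; intros. destruct (_ <=? _)%nat; auto. ring.
Qed.

Lemma tri_sum_sum R0 (g : nat -> nat -> nat -> C) a b :
  tri_sum R0 (fun m n => sum_n_m (fun j => g j m n) a b) = sum_n_m (fun j => tri_sum R0 (g j)) a b.
Proof.
  unfold tri_sum.
  transitivity (sum_n_m (fun m => sum_n_m (fun n => sum_n_m (fun j => if (m + n <=? R0)%nat then g j m n else RtoC 0) a b) 1 R0) 1 R0).
  { apply Csum_ext; intros. apply Csum_ext; intros. destruct (_ <=? _)%nat; auto. now rewrite Csum_zero. }
  transitivity (sum_n_m (fun m => sum_n_m (fun j => sum_n_m (fun n => if (m + n <=? R0)%nat then g j m n else RtoC 0) 1 R0) a b) 1 R0).
  { apply Csum_ext; intros. apply Csum_exchange. }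
  apply (Csum_exchange (fun m j => sum_n_m (fun n => if (m + n <=? R0)%nat then g j m n else RtoC 0) 1 R0)).
Qed.

Lemma triple_prod (A B Cc : nat -> C) X a1 b1 a2 b2 a3 b3 :
  Cmult (Cmult (Cmult (sum_n_m A a1 b1) (sum_n_m B a2 b2)) (sum_n_m Cc a3 b3)) X =
  sum_n_m (fun j => sum_n_m (fun l => sum_n_m (fun r => Cmult (Cmult (Cmult (A j) (B l)) (Cc r)) X) a3 b3) a2 b2) a1 b1.
Proof.
  transitivity (sum_n_m (fun j => Cmult (A j) (Cmult (Cmult (sum_n_m B a2 b2) (sum_n_m Cc a3 b3)) X)) a1 b1).
  { rewrite Csum_mult_r. ring. }
  apply Csum_ext; intros j _.
  transitivity (sum_n_m (fun l => Cmult (B l) (Cmult (A j) (Cmult (sum_n_m Cc a3 b3) X))) a2 b2).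
  { rewrite Csum_mult_r. ring. }
  apply Csum_ext; intros l _.
  transitivity (sum_n_m (fun r => Cmult (Cmult (Cmult (A j) (B l)) X) (Cc r)) a3 b3).
  { rewrite Csum_mult_l. ring. }
  apply Csum_ext; intros; ring.
Qed.

Lemma Csum_reflect1 (f : nat -> C) n :
  sum_n_m f 1 (n - 1) = sum_n_m (fun j => f (n - j)%nat) 1 (n - 1).
Proof.
  destruct (Nat.lt_ge_cases n 2). { rewrite !Csum_empty by lia. reflexivity. }
  replace (n - 1)%nat with (1 + (n - 2))%nat by lia. rewrite Csum_reflect.
  apply Csum_ext; intros. f_equal. lia.
Qed.

Lemma lin1 (f g : nat -> C) al be n m :
  sum_n_m (fun i => Cplus (Cmult al (f i)) (Cmult be (g i))) n m =
  Cplus (Cmult al (sum_n_m f n m)) (Cmult be (sum_n_m g n m)).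
Proof. rewrite Csum_plus, !Csum_mult_l. reflexivity. Qed.

Lemma lin3 (F G : nat -> nat -> nat -> C) al be a1 b1 a2 b2 a3 b3 :
  sum_n_m (fun j => sum_n_m (fun l => sum_n_m (fun r => Cplus (Cmult al (F j l r)) (Cmult be (G j l r))) a3 b3) a2 b2) a1 b1 =
  Cplus (Cmult al (sum_n_m (fun j => sum_n_m (fun l => sum_n_m (fun r => F j l r) a3 b3) a2 b2) a1 b1))
        (Cmult be (sum_n_m (fun j => sum_n_m (fun l => sum_n_m (fun r => G j l r) a3 b3) a2 b2) a1 b1)).
Proof.
  rewrite <- lin1. apply Csum_ext; intros. rewrite <- lin1. apply Csum_ext; intros. apply lin1.
Qed.

Lemma scal3 (F : nat -> nat -> nat -> C) al a1 b1 a2 b2 a3 b3 :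
  sum_n_m (fun j => sum_n_m (fun l => sum_n_m (fun r => Cmult al (F j l r)) a3 b3) a2 b2) a1 b1 =
  Cmult al (sum_n_m (fun j => sum_n_m (fun l => sum_n_m (fun r => F j l r) a3 b3) a2 b2) a1 b1).
Proof.
  rewrite <- Csum_mult_l. apply Csum_ext; intros. rewrite <- Csum_mult_l. apply Csum_ext; intros. apply Csum_mult_l.
Qed.

Lemma Cconj_RtoC (r : R) : Cconj (RtoC r) = RtoC r.
Proof. unfold Cconj, RtoC; simpl. f_equal; ring. Qed.

Lemma conj_shift (h : nat) (phi : Z -> C) (Hphi : has_conductor (Z.of_nat h) phi) j :
  (j <= h)%nat -> phi (Z.of_nat (h - j)) = Cmult (phi (-1)%Z) (phi (Z.of_nat j)).
Proof.
  intros Hj. rewrite Nat2Z.inj_sub by auto.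
  replace (Z.of_nat h - Z.of_nat j)%Z with ((-1) * Z.of_nat j + Z.of_nat h)%Z by ring.
  rewrite (chi_per h phi Hphi). apply (chi_mul h phi Hphi).
Qed.

Theorem proposition2
  (h k q : nat) (phi chi psi : Z -> C) (a b : nat)
  (Hphi : has_conductor (Z.of_nat h) phi)
  (Hchi : has_conductor (Z.of_nat k) chi)
  (Hpsi : has_conductor (Z.of_nat q) psi)
  (Ha : (1 <= a)%nat) (Hb : (1 <= b)%nat)
  (Hsign : Cmult (Cmult (phi (-1)%Z) (chi (-1)%Z)) (psi (-1)%Z)
           = RtoC ((-1) ^ (a + b + 1)))
  (Lv : C) (T : R -> R -> C)
  (HL : is_L a b phi chi psi Lv)
  (HT : forall j l r : nat,
      (1 <= j <= h - 1)%nat -> (1 <= l <= k - 1)%nat -> (1 <= r <= q - 1)%nat ->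
      let x := INR j / INR h + INR r / INR q in
      let y := INR l / INR k + INR r / INR q in
      is_T a b x y (T x y) /\ is_T a b (- x) (- y) (T (- x) (- y))) :
  Cmult (Cmult (Cmult (gauss_sum h (char_conj phi)) (gauss_sum k (char_conj chi)))
               (gauss_sum q (char_conj psi))) Lv
  = sum_n_m (fun j : nat => sum_n_m (fun l : nat => sum_n_m (fun r : nat =>
      Cmult (Cmult (Cmult (Cconj (phi (Z.of_nat j))) (Cconj (chi (Z.of_nat l))))
                   (Cconj (psi (Z.of_nat r))))
            (U_of a b T (INR j / INR h + INR r / INR q) (INR l / INR k + INR r / INR q)))
      1 (q - 1)) 1 (k - 1)) 1 (h - 1).
Proof.
  set (G := Cmult (Cmult (gauss_sum h (char_conj phi)) (gauss_sum k (char_conj chi)))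
               (gauss_sum q (char_conj psi))).
  set (cf := fun j l r : nat => Cmult (Cmult (Cconj (phi (Z.of_nat j))) (Cconj (chi (Z.of_nat l))))
                   (Cconj (psi (Z.of_nat r)))).
  set (X := fun j r : nat => INR j / INR h + INR r / INR q).
  set (Y := fun l r : nat => INR l / INR k + INR r / INR q).
  assert (HA : forall R0, Cmult G (L_partial a b phi chi psi R0) =
    sum_n_m (fun j => sum_n_m (fun l => sum_n_m (fun r =>
      Cmult (cf j l r) (T_partial a b (X j r) (Y l r) R0)) 1 (q - 1)) 1 (k - 1)) 1 (h - 1)).
  { intros R0. unfold L_partial. rewrite tri_scal.
    transitivity (tri_sum R0 (fun m n => sum_n_m (fun j => sum_n_m (fun l => sum_n_m (fun r =>
      Cmult (cf j l r) (Cdiv (Cmult (e2pi (INR m * X j r)) (e2pi (INR n * Y l r)))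
         (RtoC (INR n ^ a * INR (m + n) ^ b)))) 1 (q - 1)) 1 (k - 1)) 1 (h - 1))).
    { apply tri_ext; intros m n.
      transitivity (Cmult (Cmult (Cmult
        (Cmult (gauss_sum h (char_conj phi)) (phi (Z.of_nat m)))
        (Cmult (gauss_sum k (char_conj chi)) (chi (Z.of_nat n))))
        (Cmult (gauss_sum q (char_conj psi)) (psi (Z.of_nat (m + n)))))
        (Cinv (RtoC (INR n ^ a * INR (m + n) ^ b)))).
      { unfold G, Cdiv. ring. }
      rewrite !KL by auto. rewrite triple_prod.
      apply Csum_ext; intros j _. apply Csum_ext; intros l _. apply Csum_ext; intros r _.
      unfold X, Y, cf. rewrite !Rmult_plus_distr_l, !e2pi_add, plus_INR, Rmult_plus_distr_r, e2pi_add.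
      unfold Cdiv. ring. }
    rewrite tri_sum_sum. apply Csum_ext; intros j _.
    rewrite tri_sum_sum. apply Csum_ext; intros l _.
    rewrite tri_sum_sum. apply Csum_ext; intros r _.
    unfold T_partial. rewrite tri_scal. reflexivity. }
  set (S := sum_n_m (fun j => sum_n_m (fun l => sum_n_m (fun r =>
      Cmult (cf j l r) (T (X j r) (Y l r))) 1 (q - 1)) 1 (k - 1)) 1 (h - 1)).
  assert (HB : Cmult G Lv = S).
  { apply (lim_uniq (fun R0 => Cmult G (L_partial a b phi chi psi R0))).
    - apply lim_Cmult_l. exact HL.
    - eapply filterlim_ext. intros R0. symmetry. apply HA.
      unfold S. apply lim_sum; intros j Hj. apply lim_sum; intros l Hl. apply lim_sum; intros r Hr.
      apply lim_Cmult_l. pose proof (HT j l r Hj Hl Hr) as HH. cbv zeta in HH. apply HH. }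
  set (eps := (-1) ^ (a + b + 1)).
  set (S' := sum_n_m (fun j => sum_n_m (fun l => sum_n_m (fun r =>
      Cmult (cf j l r) (T (- X j r) (- Y l r))) 1 (q - 1)) 1 (k - 1)) 1 (h - 1)).
  assert (HC : S' = Cmult (RtoC eps) S).
  { unfold S', S. rewrite <- scal3.
    rewrite Csum_reflect1. apply Csum_ext; intros j Hj.
    rewrite Csum_reflect1. apply Csum_ext; intros l Hl.
    rewrite Csum_reflect1. apply Csum_ext; intros r Hr.
    assert (Hj' : (1 <= h - j <= h - 1)%nat) by lia.
    assert (Hl' : (1 <= k - l <= k - 1)%nat) by lia.
    assert (Hr' : (1 <= q - r <= q - 1)%nat) by lia.
    assert (HTT : T (- X (h - j)%nat (q - r)%nat) (- Y (k - l)%nat (q - r)%nat) = T (X j r) (Y l r)).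
    { pose proof (HT _ _ _ Hj' Hl' Hr') as [_ H1]. pose proof (HT _ _ _ Hj Hl Hr) as [H2 _].
      apply (lim_uniq (T_partial a b (X j r) (Y l r))).
      2: exact H2.
      eapply filterlim_ext. 2: exact H1. intros R0. unfold T_partial. apply tri_ext; intros m n.
      assert (Hh0 : INR h <> 0) by (apply not_0_INR; lia).
      assert (Hk0 : INR k <> 0) by (apply not_0_INR; lia).
      assert (Hq0 : INR q <> 0) by (apply not_0_INR; lia).
      f_equal. f_equal.
      - rewrite <- (e2pi_Z (INR m * X j r) (-2 * Z.of_nat m)). f_equal. unfold X. rewrite mult_IZR, <- INR_IZR_INZ, !minus_INR by lia. field. auto.
      - rewrite <- (e2pi_Z (INR n * Y l r) (-2 * Z.of_nat n)). f_equal. unfold Y. rewrite mult_IZR, <- INR_IZR_INZ, !minus_INR by lia. field. auto. }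
    rewrite HTT. unfold cf.
    rewrite (conj_shift h phi Hphi j), (conj_shift k chi Hchi l), (conj_shift q psi Hpsi r) by lia.
    rewrite !Cmult_conj.
    assert (Hs : Cmult (Cmult (Cconj (phi (-1)%Z)) (Cconj (chi (-1)%Z))) (Cconj (psi (-1)%Z)) = RtoC eps).
    { rewrite <- !Cmult_conj, Hsign. apply Cconj_RtoC. }
    rewrite <- Hs. ring. }
  unfold U_of.
  set (s := (-1) ^ (a + b)).
  transitivity (sum_n_m (fun j => sum_n_m (fun l => sum_n_m (fun r =>
      Cplus (Cmult (RtoC (/ 2)) (Cmult (cf j l r) (T (X j r) (Y l r))))
            (Cmult (Copp (Cmult (RtoC (/ 2)) (RtoC s))) (Cmult (cf j l r) (T (- X j r) (- Y l r))))) 1 (q - 1)) 1 (k - 1)) 1 (h - 1)).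
  2: { apply Csum_ext; intros j _. apply Csum_ext; intros l _. apply Csum_ext; intros r _.
       unfold cf, X, Y. unfold Cminus. ring. }
  rewrite lin3. fold S. fold S'. rewrite HC, <- HB.
  assert (Hse : Cmult (RtoC s) (RtoC eps) = RtoC (-1)).
  { assert (E2 : (-1)^(a+b) * (-1)^(a+b) = 1).
    { rewrite <- Rpow_mult_distr. replace ((-1)*(-1)) with 1 by ring. apply pow1. }
    unfold s, eps. rewrite (pow_add (-1) (a+b) 1). set (P := (-1)^(a+b)) in *.
    unfold Cmult, RtoC; simpl. f_equal.
    - transitivity (- (P * P)). ring. rewrite E2. ring.
    - ring. }
  set (al := RtoC (/ 2)).
  transitivity (Cmult (Cplus al al) (Cmult G Lv)).
  2: { transitivity (Cplus (Cmult al (Cmult G Lv)) (Cmult (Copp (Cmult al (Cmult (RtoC s) (RtoC eps)))) (Cmult G Lv))).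
       2: ring. rewrite Hse. unfold al. unfold Copp, Cmult, Cplus, RtoC; simpl. f_equal; ring. }
  replace (Cplus al al) with (RtoC 1). ring.
  unfold al, Cplus, RtoC; simpl. f_equal; field.
Qed.
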